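(* Let $\mathcal{C}$ be a set of node-disjoint chains with node set $V=\{1,\ldots,n\}$ and $T$ a time function for $\mathcal{C}$, and let $\mathcal{P}(\mathcal{G}^{\mathcal{C},T})=\{A\in\mathbb{R}^{n\times n}: A\in\mathcal{Q}(G)\text{ for some }G\in\mathcal{G}^{\mathcal{C},T}\}$. For a set of control nodes $V_C\subseteq V$ with input matrix $B$, the pair $(A,B)$ is controllable for every $A\in\mathcal{P}(\mathcal{G}^{\mathcal{C},T})$ if and only if $V_C$ contains the set of sources of $\mathcal{C}$.
   Context: Graphs are directed, self-loops allowed. $\mathcal{Q}(G)=\{A\in\mathbb{R}^{n\times n}: \text{for } i\neq j,\ A_{ij}\neq0\iff(j,i)\in E(G)\}$. For $V_C=\{j_1,\ldots,j_m\}$, $B=[e_{j_1},\ldots,e_{j_m}]$ with $e_j$ the $j$th column of $I_n$. A chain is a directed path graph with source (start node) and sink (end node); for a non-sink $v$, $v+1$ is its out-neighbor in the chain. For node-disjoint chains $\mathcal{C}=\{C_1,\ldots,C_m\}$, $V=\bigcup_iV(C_i)$, $\gamma=|V|-m+1$, a time function is $T:V\to\{1,\ldots,\gamma\}$ with (1) $T(v)=1$ for every source; (2) distinct non-source nodes get distinct values; (3) $T(v)<T(v+1)$ for non-sink $v$. $T_{\max}(v)=\gamma$ for a sink $v$, else $T_{\max}(v)=T(v+1)-1$. $\mathcal{G}^{\mathcal{C},T}$ is the set of graphs $G$ with $V(G)=V$, $\bigcup_iE(C_i)\subseteq E(G)$, and $(u,v)\notin E(G)$ whenever $(u,v)\notin\bigcup_iE(C_i)$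 and $T_{\max}(u)<T(v)$. *)

(* Defs.v *)
From mathcomp Require Import all_boot all_order all_algebra.
From mathcomp Require Import reals.
Set Implicit Arguments. Unset Strict Implicit. Unset Printing Implicit Defensive.
Import Order.TTheory GRing.Theory Num.Theory.
Local Open Scope ring_scope.

(* Nodes are 'I_n (the paper's {1,...,n}).  A chain is represented by the
   nonempty duplicate-free sequence of its nodes, from source to sink.
   A family of chains is a seq of chains. *)

Section Chains.
Variable n : nat.
Implicit Types (C : seq (seq 'I_n)) (u v : 'I_n).

Definition valid_chains C : Prop :=
  [/\ forall c, c \in C -> c != [::],
      uniq (flatten C) &
      forall v, v \in flatten C].

(* (u,v) is an edge of some chain, i.e. v = u+1 *)
Definition chain_edge C u v : bool :=
  has (fun c => (u, v) \in zip c (behead c)) C.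

Definition is_source C v : bool := has (fun c => ohead c == Some v) C.

Definition is_sink C v : bool := has (fun c => ohead (rev c) == Some v) C.

Definition gamma C : nat := (n - size C + 1)%N.

Definition time_function C (T : 'I_n -> nat) : Prop :=
  [/\ forall v, (1 <= T v <= gamma C)%N,
      forall v, is_source C v -> T v = 1%N,
      forall u v, ~~ is_source C u -> ~~ is_source C v -> u != v -> T u != T v &
      forall u v, chain_edge C u v -> (T u < T v)%N].

Definition Tmax C (T : 'I_n -> nat) v : nat :=
  match [pick w | chain_edge C v w] with
  | Some w => (T w - 1)%N
  | None => gamma C
  end.

(* directed graphs on V (self-loops allowed) as edge relations;
   E u v means (u,v) \in E(G) *)
Definition in_graph_class C (T : 'I_n -> nat) (E : rel 'I_n) : Prop :=
  (forall u v, chain_edge C u v -> E u v) /\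
  (forall u v, ~~ chain_edge C u v -> (Tmax C T u < T v)%N -> ~~ E u v).

End Chains.

Definition in_Q (R : numDomainType) (n : nat) (E : rel 'I_n) (A : 'M[R]_n) : Prop :=
  forall i j : 'I_n, i != j -> (A i j != 0) = E j i.

Definition in_P (R : numDomainType) (n : nat) (C : seq (seq 'I_n))
  (T : 'I_n -> nat) (A : 'M[R]_n) : Prop :=
  exists E : rel 'I_n, in_graph_class C T E /\ in_Q E A.

(* input matrix B = [e_{j_1}, ..., e_{j_m}], V_C = {j_1 < ... < j_m} *)
Definition input_mx (R : fieldType) (n : nat) (VC : {set 'I_n}) :
  'M[R]_(n, #|VC|) :=
  \matrix_(i < n, k < #|VC|) ((i == enum_val k)%:R).

Definition kalman_mx (R : fieldType) (n k : nat) (A : 'M[R]_n)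
  (B : 'M[R]_(n, k)) : 'M[R]_(n, \sum_(i < n) k) :=
  mxrow (q_ := fun _ : 'I_n => k) (fun i : 'I_n => A ^+ i *m B).

Definition controllable (R : fieldType) (n k : nat) (A : 'M[R]_n)
  (B : 'M[R]_(n, k)) : Prop :=
  \rank (kalman_mx A B) = n.

(* Main.v *)
Require Import Defs.
From mathcomp Require Import all_boot all_order all_algebra.
From mathcomp Require Import reals zify.
Import Order.TTheory GRing.Theory Num.Theory.
Set Implicit Arguments. Unset Strict Implicit. Unset Printing Implicit Defensive.




Lemma zip_mem (T : eqType) (x : T) s (u v : T) : (u, v) \in zip (x :: s) s -> (u \in x :: s) && (v \in s).
Proof.
elim: s x => [|y s IH] x //=; rewrite in_cons => /orP [/eqP [-> ->]|/IH/andP[H1 H2]].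
  by rewrite !in_cons !eqxx /= ?orbT.
by rewrite H1 (in_cons y s v) H2 !orbT.
Qed.

Lemma zip_succ (T : eqType) (x : T) s (u v w : T) : uniq (x :: s) -> (u, v) \in zip (x :: s) s ->
  (u, w) \in zip (x :: s) s -> v = w.
Proof.
elim: s x => [|y s IH] x //= /andP [Hx Hu]; rewrite !in_cons.
move=> /orP [/eqP [-> ->]|H1] /orP [/eqP []|H2] //.
- by move/zip_mem: H2 => /andP [H2 _]; move: Hx; rewrite H2.
- by move=> E _; move/zip_mem: H1 => /andP [H1 _]; move: Hx; rewrite -E H1.
- exact: IH Hu H1 H2.
Qed.

Lemma zip_pred (T : eqType) (x : T) s (v : T) : v \in s -> exists u, (u, v) \in zip (x :: s) s.
Proof.
elim: s x => [|y s IH] x //; rewrite in_cons => /orP [/eqP E|/(IH y) [u Hu]].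
  by exists x; rewrite /= in_cons E eqxx.
by exists u; rewrite /= in_cons Hu orbT.
Qed.

Lemma flatten_same (T : eqType) (C : seq (seq T)) c c' (x : T) : uniq (flatten C) -> c \in C -> c' \in C ->
  x \in c -> x \in c' -> c = c'.
Proof.
elim: C => [|c0 C IH] //= /[!cat_uniq] /and3P [_ Hd HC].
rewrite !in_cons => /orP [/eqP ->|Hc] /orP [/eqP ->|Hc'] // Hx Hx'.
- by case/negP: Hd; apply/hasP; exists x => //; apply/flattenP; exists c'.
- by case/negP: Hd; apply/hasP; exists x => //; apply/flattenP; exists c.
- exact: IH.
Qed.

Lemma flatten_uniq (T : eqType) (C : seq (seq T)) c : uniq (flatten C) -> c \in C -> uniq c.
Proof.
elim: C => [|c0 C IH] //= /[!cat_uniq] /and3P [H0 _ HC].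
by rewrite in_cons => /orP [/eqP ->|]; last exact: IH.
Qed.

Section Ch.
Variable n : nat.
Variable C : seq (seq 'I_n).
Hypothesis HV : valid_chains C.

Lemma src_no_pred s u : is_source C s -> ~~ chain_edge C u s.
Proof.
case: HV => Hne Hu Hall.
case/hasP => c Hc; case: c Hc => [|x t] Hc //= /eqP [Exs].
apply/hasP => [[c' Hc']]; case: c' Hc' => [|x' t'] Hc' //= /zip_mem /andP [_ Hst].
have E : x :: t = x' :: t'.
  by apply: (flatten_same Hu Hc Hc' (x := s)); rewrite in_cons ?Exs ?eqxx ?Hst ?orbT.
have := flatten_uniq Hu Hc; rewrite /= => /andP [Hx _].
by move: Hx; case: E => _ Et; rewrite Exs Et Hst.
Qed.

Lemma pred_exists v : ~~ is_source C v -> exists u, chain_edge C u v.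
Proof.
case: HV => Hne Hu Hall Hs.
case/flattenP: (Hall v) => c Hc; case: c Hc => [|x t] Hc; first by have := Hne _ Hc.
rewrite in_cons => /orP [/eqP E|Hv].
  by case/negP: Hs; apply/hasP; exists (x :: t) => //=; rewrite E.
have [u Hz] := zip_pred x Hv.
by exists u; apply/hasP; exists (x :: t).
Qed.

Lemma succ_uniq u v w : chain_edge C u v -> chain_edge C u w -> v = w.
Proof.
case: HV => Hne Hu Hall.
case/hasP => c Hc; case: c Hc => [|x t] Hc //= H1.
case/hasP => c' Hc'; case: c' Hc' => [|x' t'] Hc' //= H2.
have E : x :: t = x' :: t'.
  apply: (flatten_same Hu Hc Hc' (x := u)).
    by case/andP: (zip_mem H1).
  by case/andP: (zip_mem H2).
case: E => Ex Et; subst x' t'.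
exact: (zip_succ (flatten_uniq Hu Hc) H1 H2).
Qed.

Lemma Tmax_edge (T : 'I_n -> nat) u v : chain_edge C u v -> Tmax C T u = (T v - 1)%N.
Proof.
move=> H; rewrite /Tmax; case: pickP => [w Hw|H0].
  by rewrite (succ_uniq Hw H).
by have := H0 v; rewrite H.
Qed.
End Ch.
Local Open Scope ring_scope.

Lemma ctrlP (F : fieldType) (n k : nat) (A : 'M[F]_n) (B : 'M[F]_(n, k)) :
  controllable A B <->
  (forall z : 'rV[F]_n, (forall i : 'I_n, z *m (A ^+ i *m B) = 0) -> z = 0).
Proof.
rewrite /controllable; split.
  move=> Hr z Hz.
  have Hf : row_free (kalman_mx A B) by rewrite /row_free Hr.
  rewrite -kermx_eq0 in Hf.
  have : (z <= kermx (kalman_mx A B))%MS.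
    apply/sub_kermxP; rewrite /kalman_mx mul_mxrow.
    by rewrite -(mxrow0 (q_ := fun _ : 'I_n => k)); apply/eq_mxrowP => i; rewrite Hz.
  by rewrite (eqP Hf) submx0 => /eqP.
move=> H; apply/eqP; rewrite -/(row_free _) -kermx_eq0; apply/eqP.
apply/row_matrixP => i; rewrite row0; apply: H => j.
have /sub_kermxP := row_sub i (kermx (kalman_mx A B)).
rewrite /kalman_mx mul_mxrow -(mxrow0 (q_ := fun _ : 'I_n => k)).
by move/eq_mxrowP; apply.
Qed.

Lemma mulB_entry (F : fieldType) n (VC : {set 'I_n}) (y : 'rV[F]_n) j :
  (y *m input_mx F VC) 0 j = y 0 (enum_val j).
Proof.
rewrite mxE (bigD1 (enum_val j)) //= big1 ?addr0; first by rewrite mxE eqxx mulr1.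
by move=> i /negbTE Hi; rewrite mxE Hi mulr0.
Qed.

Theorem theorem4 (R : realType) (n : nat) (C : seq (seq 'I_n))
  (T : 'I_n -> nat) (VC : {set 'I_n}) :
  valid_chains C -> time_function C T ->
  ((forall A : 'M[R]_n, in_P C T A -> controllable A (input_mx R VC)) <->
   (forall v : 'I_n, is_source C v -> v \in VC)).
Proof.
move=> HV HT; split.
- move=> H s Hs; apply/idPn => HsV.
  pose A : 'M[R]_n := \matrix_(i, j) (chain_edge C j i)%:R.
  have HA : in_P C T A.
    exists (fun u v => chain_edge C u v); split; first by split => // u v ->.
    by move=> i j _; rewrite mxE; case: (chain_edge C j i); rewrite ?oner_neq0 ?eqxx.
  have /ctrlP Hc := H A HA.
  have : delta_mx 0 s = 0 :> 'rV[R]_n.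
    apply: Hc => i; rewrite mulmxA -rowE.
    case: i => [[|i] Hi] /=.
      rewrite expr0 rowE -mulmxA mul1mx; apply/rowP => j; rewrite mulB_entry !mxE.
      have : enum_val j \in VC by apply: enum_valP.
      by rewrite eqxx /=; case: eqP => // ->; rewrite (negbTE HsV).
    rewrite exprS -mulmxE row_mul.
    have -> : row s A = 0.
      by apply/rowP => j; rewrite !mxE (negbTE (src_no_pred HV j Hs)).
    by rewrite !mul0mx.
  by move/rowP/(_ s); rewrite !mxE !eqxx /= => /eqP; rewrite oner_eq0.
- move=> Hsrc A [E [[HE1 HE2] HQ]]; apply/ctrlP => z Hz.
  pose y k := z *m A ^+ k.
  have F1 : forall k v, (k < n)%N -> v \in VC -> y k 0 v = 0.
    move=> k v Hk Hv.
    have := Hz (Ordinal Hk); rewrite mulmxA => /rowP /(_ (enum_rank_in Hv v)).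
    by rewrite mulB_entry enum_rankK_in // /y => ->; rewrite mxE.
  have F2 : forall k, y k.+1 = y k *m A.
    by move=> k; rewrite /y exprSr -mulmxE mulmxA.
  case: HT => HT1 HT2 HT3 HT4.
  have Main : forall t k v, (k + t <= n)%N -> (T v <= t)%N -> y k 0 v = 0.
    elim=> [|t IH] k v Hkt Hv.
      by have := HT1 v; case/andP => H1 _; move: Hv; rewrite leqNgt H1.
    case: (leqP (T v) t) => Hvt; first by apply: IH => //; lia.
    have EvT : T v = t.+1 by lia.
    case Hs: (is_source C v).
      by apply: F1; [lia | apply: Hsrc].
    have [u Huv] := pred_exists HV (negbT Hs).
    have Tu : (T u < T v)%N := HT4 _ _ Huv.
    have Hneq : v != u by apply/eqP => E0; move: Tu; rewrite E0 ltnn.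
    have Hw : forall i, (T i <= t)%N -> y k 0 i = 0 by move=> i; apply: IH; lia.
    have H1 : (y k *m A) 0 u = 0 by rewrite -F2; apply: IH; lia.
    move: H1; rewrite mxE (bigD1 v) //= big1 ?addr0.
      move/eqP; rewrite mulf_eq0 => /orP [/eqP //|].
      by move=> /eqP HA0; have := HQ _ _ Hneq; rewrite HA0 eqxx (HE1 _ _ Huv).
    move=> i Hiv.
    case: (eqVneq i u) => [->|Hiu]; first by rewrite Hw ?mul0r //; lia.
    case: (eqVneq (A i u) 0) => [->|HA]; first by rewrite mulr0.
    rewrite Hw ?mul0r //.
    have HEui : E u i by rewrite -(HQ _ _ Hiu).
    case He: (chain_edge C u i).
      by move: Hiv; rewrite (succ_uniq HV He Huv) eqxx.
    have := HE2 u i (negbT He); rewrite (Tmax_edge HV T Huv) HEui.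
    move=> H0; case: (leqP (T i) t) => // Hlt; have : (T v - 1 < T i)%N by lia.
    by move=> /H0.
  apply/rowP => v; rewrite mxE.
  have -> : z = y 0%N by rewrite /y expr0 mulmx1.
  apply: (Main n) => //.
  case/andP: (HT1 v) => _; rewrite /gamma.
  case: HV => _ _ Hall.
  have : C != [::] by case: (C) (Hall v).
  move=> HC; have : (0 < size C)%N by rewrite lt0n size_eq0.
  have := ltn_ord v; lia.
Qed.
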